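(* Let $(A_k,b_k,c_k)_{k\in\mathbb{Z}}$ define the discrete-time system $x_{k+1}=A_kx_k+b_ku_k$, $y_k=c_kx_k$, with $A_k\in\mathbb{R}^{n\times n}$, $b_k\in\mathbb{R}^{n\times1}$, $c_k\in\mathbb{R}^{1\times n}$. The system is completely controllable if and only if it is algebraically equivalent to a system $(\tilde A_k,\tilde b_k,\tilde c_k)_{k\in\mathbb{Z}}$ in controller canonical form.
   Context: Complete controllability: for every $k\in\mathbb{Z}$ and every $\xi_s,\xi_f\in\mathbb{R}^n$ there are controls $u_k,\dots,u_{k+n-1}$ such that $x_k=\xi_s$ implies $x_{k+n}=\xi_f$. Two systems $(A_k,b_k,c_k)_{k\in\mathbb{Z}}$ and $(\tilde A_k,\tilde b_k,\tilde c_k)_{k\in\mathbb{Z}}$ are algebraically equivalent if there are invertible matrices $\{T_k\}_{k\in\mathbb{Z}}$ with $\tilde A_k=T_{k+1}A_kT_k^{-1}$, $\tilde b_k=T_{k+1}b_k$, $\tilde c_k=c_kT_k^{-1}$ for all $k$. A system is in controller canonical form if for every $k$, $b_k=(0,\dots,0,1)^T$ and $A_k$ has ones on the superdiagonal (entries $(i,i+1)$, $i=1,\dots,n-1$), zeros elsewhere in the first $n-1$ rows, and an arbitrary last row $(\alpha_{k,1},\dots,\alpha_{k,n})$. *)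

(* Defs.v *)
From mathcomp Require Import all_boot all_order all_algebra.
From mathcomp Require Import reals.
Set Implicit Arguments. Unset Strict Implicit. Unset Printing Implicit Defensive.
Import Order.TTheory GRing.Theory Num.Theory.
Local Open Scope ring_scope.

Section Defs.
Variables (R : realType) (n : nat).

Fixpoint traj (A : int -> 'M[R]_n) (b : int -> 'cV[R]_n) (k : int)
  (xi : 'cV[R]_n) (u : int -> R) (m : nat) : 'cV[R]_n :=
  match m with
  | 0%N => xi
  | m'.+1 => A (k + m'%:Z) *m traj A b k xi u m' + u (k + m'%:Z) *: b (k + m'%:Z)
  end.

Definition completely_controllable (A : int -> 'M[R]_n) (b : int -> 'cV[R]_n) :=
  forall (k : int) (xs xf : 'cV[R]_n),
    exists u : int -> R, traj A b k xs u n = xf.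

Definition alg_equiv (A : int -> 'M[R]_n) (b : int -> 'cV[R]_n) (c : int -> 'rV[R]_n)
  (At : int -> 'M[R]_n) (bt : int -> 'cV[R]_n) (ct : int -> 'rV[R]_n) :=
  exists T : int -> 'M[R]_n,
    (forall k, T k \in unitmx) /\
    (forall k, At k = T (k + 1) *m A k *m invmx (T k)
            /\ bt k = T (k + 1) *m b k
            /\ ct k = c k *m invmx (T k)).

Definition ccf_b : 'cV[R]_n := \col_(i < n) ((i : nat) == n.-1)%:R.

(* ones on the superdiagonal, zeros elsewhere in the first n-1 rows;
   last row arbitrary (0-based indices). *)
Definition ccf_A (M : 'M[R]_n) : Prop :=
  forall i j : 'I_n, (i.+1 < n)%N -> M i j = ((j : nat) == i.+1)%:R.

Definition controller_canonical_form (A : int -> 'M[R]_n) (b : int -> 'cV[R]_n) :=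
  forall k, ccf_A (A k) /\ b k = ccf_b.

End Defs.

(* Main.v *)
Require Import Defs.
From mathcomp Require Import all_boot all_order all_algebra.
From mathcomp Require Import reals.
From mathcomp Require Import zify ring lra.
From Stdlib Require Import IndefiniteDescription.
Set Implicit Arguments. Unset Strict Implicit. Unset Printing Implicit Defensive.
Import Order.TTheory GRing.Theory Num.Theory.
Local Open Scope ring_scope.

Fixpoint phi (R : realType) (n : nat) (A : int -> 'M[R]_n) (k : int) (m : nat) : 'M[R]_n :=
  match m with 0%N => 1%:M | m'.+1 => A (k + m'%:Z) *m phi A k m' end.

Lemma phiD (R : realType) (n : nat) (A : int -> 'M[R]_n) a m p :
  phi A a (m + p) = phi A (a + m%:Z) p *m phi A a m.
Proof.
elim: p => [|p IH]; first by rewrite addn0 /= mul1mx.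
rewrite addnS /= IH mulmxA; congr (A _ *m _ *m _).
rewrite PoszD; ring.
Qed.

Lemma phiS (R : realType) (n : nat) (A : int -> 'M[R]_n) k m :
  phi A k m.+1 = phi A (k + 1) m *m A k.
Proof.
by rewrite -addn1 addnC phiD /= addr0 mulmx1.
Qed.

Lemma traj_eq (R : realType) (n : nat) (A : int -> 'M[R]_n) b k xi u m :
  traj A b k xi u m = phi A k m *m xi +
    \sum_(i < m) u (k + i%:Z) *: (phi A (k + i%:Z + 1) (m - i.+1) *m b (k + i%:Z)).
Proof.
elim: m => [|m IH]; first by rewrite big_ord0 addr0 /= mul1mx.
rewrite /= IH big_ord_recr /= subnn /= mul1mx mulmxDr mulmxA addrA; congr (_ + _ + _).
rewrite mulmx_sumr; apply: eq_bigr => i _.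
rewrite -scalemxAr subSS; have lt := ltn_ord i.
have -> : (m - i = (m - i.+1).+1)%N by lia.
rewrite /= mulmxA; do 3 f_equal.
congr (A _); lia.
Qed.

Definition Kc (R : realType) (n : nat) (A : int -> 'M[R]_n) (b : int -> 'cV[R]_n) (k : int) : 'M[R]_n :=
  \matrix_(i < n, j < n) (phi A (k + j%:Z + 1) (n - j.+1) *m b (k + j%:Z)) i 0.

Lemma Kc_traj0 (R : realType) (n : nat) (A : int -> 'M[R]_n) b k u :
  traj A b k 0 u n = Kc A b k *m \col_(i < n) u (k + i%:Z).
Proof.
rewrite traj_eq mulmx0 add0r; apply/matrixP => i j; rewrite !mxE summxE.
by apply: eq_bigr => l _; rewrite !mxE (ord1 j) mulrC.
Qed.

Lemma ctrl_unit (R : realType) (n : nat) (A : int -> 'M[R]_n) b :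
  completely_controllable A b -> forall k, Kc A b k \in unitmx.
Proof.
move=> H k.
have Hu : forall j : 'I_n, {u : int -> R | traj A b k 0 u n = delta_mx j 0}.
  move=> j; apply: constructive_indefinite_description; exact: H.
pose X := \matrix_(i < n, j < n) (sval (Hu j)) (k + i%:Z).
suff : Kc A b k *m X = 1%:M by move/mulmx1_unit=> [].
apply/matrixP => i j.
have := congr1 (fun M : 'cV[R]_n => M i 0) (svalP (Hu j)).
rewrite Kc_traj0 /= !mxE => E.
rewrite andbT in E.
rewrite -[RHS]E.
by apply: eq_bigr => l _; rewrite !mxE.
Qed.

Lemma phi_equiv (R : realType) (n : nat) (A At : int -> 'M[R]_n) (T : int -> 'M[R]_n) :
  (forall k, T k \in unitmx) -> (forall k, At k = T (k+1) *m A k *m invmx (T k)) ->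
  forall a m, phi At a m = T (a + m%:Z) *m phi A a m *m invmx (T a).
Proof.
move=> HT HA a; elim=> [|m IH] /=.
  by rewrite addr0 mulmx1 mulmxV.
rewrite IH HA !mulmxA mulmxKV //; congr (T _ *m _ *m _ *m _).
lia.
Qed.

Lemma Kc_equiv (R : realType) (n : nat) (A At : int -> 'M[R]_n) b bt (T : int -> 'M[R]_n) :
  (forall k, T k \in unitmx) -> (forall k, At k = T (k+1) *m A k *m invmx (T k)) ->
  (forall k, bt k = T (k+1) *m b k) ->
  forall k, Kc At bt k = T (k + n%:Z) *m Kc A b k.
Proof.
move=> HT HA Hb k; apply/matrixP => i j.
rewrite [LHS]mxE.
have -> : phi At (k + j%:Z + 1) (n - j.+1) *m bt (k + j%:Z) =
   T (k + n%:Z) *m (phi A (k + j%:Z + 1) (n - j.+1) *m b (k + j%:Z)).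
  rewrite (phi_equiv HT HA) Hb !mulmxA mulmxKV //.
  have -> : k + j%:Z + 1 + (n - j.+1)%:Z = k + n%:Z by have := ltn_ord j; lia.
  by [].
rewrite !mxE; apply: eq_bigr => l _; by rewrite !mxE.
Qed.

Lemma trig_unit (R : realType) (n : nat) (M : 'M[R]_n) :
  (forall i j : 'I_n, (i < j)%N -> M i j = 0) -> (forall i, M i i = 1) -> M \in unitmx.
Proof.
move=> H1 H2; rewrite unitmxE det_trig; last exact/is_trig_mxP.
by rewrite big1 ?unitr1.
Qed.

Lemma ccf_mul (R : realType) (n : nat) (M : 'M[R]_n) (v : 'cV[R]_n) (i : 'I_n)
  (Hi : (i.+1 < n)%N) : ccf_A M -> (M *m v) i 0 = v (Ordinal Hi) 0.
Proof.
move=> HM; rewrite mxE (bigD1 (Ordinal Hi)) //= HM //= eqxx mul1r big1 ?addr0 //.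
move=> l Hl; rewrite HM //.
have -> : ((l : nat) == i.+1) = false.
  by apply/negP => /eqP E; move: Hl; rewrite -(inj_eq val_inj) /= E eqxx.
by rewrite mul0r.
Qed.

Lemma ccf_phi (R : realType) (n : nat) (At : int -> 'M[R]_n) :
  (forall k, ccf_A (At k)) -> forall a m, (m < n)%N -> forall i : 'I_n,
  (i <= n.-1 - m)%N -> (phi At a m *m ccf_b R n) i 0 = ((i : nat) == n.-1 - m)%N%:R.
Proof.
move=> HA a; elim=> [|m IH] Hm i Hi /=.
  by rewrite mul1mx mxE subn0.
have Hi1 : (i.+1 < n)%N by lia.
rewrite -mulmxA ccf_mul //= IH /=; last by lia.
  by congr ((_ : bool)%:R); apply/eqP/eqP; lia.
by lia.
Qed.

Lemma ccf_Kc_unit (R : realType) (n : nat) (At : int -> 'M[R]_n) bt :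
  controller_canonical_form At bt -> forall k, Kc At bt k \in unitmx.
Proof.
move=> H k; have HA : forall k, ccf_A (At k) by move=> l; case: (H l).
apply: trig_unit => [i j lt_ij|i]; rewrite mxE (proj2 (H _)) ccf_phi //;
  try (have := ltn_ord j); try (have := ltn_ord i); try lia.
- move=> Hi Hj; have -> : ((i : nat) == n.-1 - (n - j.+1))%N = false by apply/negbTE/eqP; lia.
  by [].
- by move=> Hi; have -> : ((i : nat) == n.-1 - (n - i.+1))%N = true by apply/eqP; lia.
Qed.

Definition e0 (R : realType) (n : nat) : 'rV[R]_n := \row_(j < n) ((j : nat) == 0%N)%:R.

Definition q (R : realType) (n : nat) (A : int -> 'M[R]_n) b (m : int) : 'rV[R]_n :=
  e0 R n *m invmx (Kc A b (m - n%:Z)).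

Definition Tm (R : realType) (n : nat) (A : int -> 'M[R]_n) b (k : int) : 'M[R]_n :=
  \matrix_(i < n, j < n) (q A b (k + i%:Z) *m phi A k i) 0 j.

Lemma row_Tm (R : realType) (n : nat) (A : int -> 'M[R]_n) b k (i : 'I_n) :
  row i (Tm A b k) = q A b (k + i%:Z) *m phi A k i.
Proof. by apply/rowP => j; rewrite !mxE. Qed.

Lemma mul_entry (R : realType) (n : nat) (X Y : 'M[R]_n) i j :
  (X *m Y) i j = (row i X *m col j Y) 0 0.
Proof. by rewrite !mxE; apply: eq_bigr => l _; rewrite !mxE. Qed.

Lemma col_Kc (R : realType) (n : nat) (A : int -> 'M[R]_n) b k (j : 'I_n) :
  col j (Kc A b k) = phi A (k + j%:Z + 1) (n - j.+1) *m b (k + j%:Z).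
Proof. by apply/colP => i; rewrite !mxE. Qed.

Lemma q_entry (R : realType) (n : nat) (A : int -> 'M[R]_n) b :
  (forall k, Kc A b k \in unitmx) ->
  forall m (j : 'I_n) p c, p = m - n%:Z + j%:Z + 1 -> c = m - n%:Z + j%:Z ->
  (q A b m *m (phi A p (n - j.+1) *m b c)) 0 0 = ((j : nat) == 0%N)%:R.
Proof.
move=> HK m j p c -> ->.
have E : q A b m *m Kc A b (m - n%:Z) = e0 R n by rewrite /q mulmxKV.
have := congr1 (fun M : 'rV[R]_n => M 0 j) E; rewrite mxE [RHS]mxE => <-.
rewrite mxE; apply: eq_bigr => l _; by rewrite !mxE.
Qed.

Lemma Tm_unit (R : realType) (n : nat) (A : int -> 'M[R]_n) b :
  (forall k, Kc A b k \in unitmx) -> forall k, Tm A b k \in unitmx.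
Proof.
move=> HK k.
suff : Tm A b k *m Kc A b (k - n%:Z) \in unitmx by rewrite unitmx_mul => /andP[].
have key : forall i j : 'I_n, (i <= j)%N ->
    (Tm A b k *m Kc A b (k - n%:Z)) i j = ((i : nat) == j)%:R.
  move=> i j lij.
  have Hj : (j - i < n)%N by have := ltn_ord j; lia.
  rewrite mul_entry row_Tm col_Kc.
  have -> : phi A k i = phi A (k - n%:Z + j%:Z + 1 + (n - j.+1)%N%:Z) i.
    by congr (phi A _ i); have := ltn_ord j; lia.
  rewrite -(mulmxA (q A b _)) (mulmxA (phi A _ i)) -phiD.
  have -> : (n - j.+1 + i = n - (Ordinal Hj).+1)%N by have := ltn_ord j; simpl; lia.
  rewrite (@q_entry _ _ _ _ HK _ (Ordinal Hj)) /=.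
  - by congr ((_ : bool)%:R); apply/eqP/eqP; lia.
  - by have := ltn_ord j; lia.
  - by have := ltn_ord j; lia.
apply: trig_unit => [i j lij|i]; rewrite key ?leqnn ?eqxx //; last exact: ltnW.
by have -> : ((i : nat) == j) = false by apply/negbTE/eqP; lia.
Qed.

Lemma Tm_ccf (R : realType) (n : nat) (A : int -> 'M[R]_n) b :
  (forall k, Kc A b k \in unitmx) -> forall k,
  ccf_A (Tm A b (k + 1) *m A k *m invmx (Tm A b k)) /\ Tm A b (k + 1) *m b k = ccf_b R n.
Proof.
move=> HK k; split.
  move=> i j Hi.
  have -> : (Tm A b (k + 1) *m A k *m invmx (Tm A b k)) i j =
            (row i (Tm A b (k + 1) *m A k *m invmx (Tm A b k))) 0 j.
    by rewrite [RHS]mxE.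
  rewrite !row_mul row_Tm -(mulmxA (q A b _)) -phiS.
  have -> : q A b (k + 1 + i%:Z) = q A b (k + (Ordinal Hi : nat)%:Z) by congr (q A b _); simpl; lia.
  rewrite -(row_Tm _ _ _ (Ordinal Hi)) -row_mul mulmxV ?Tm_unit // !mxE /=.
  by rewrite eq_sym.
apply/colP => i; rewrite [RHS]mxE.
have Hj : (n.-1 - i < n)%N by have := ltn_ord i; lia.
have -> : (Tm A b (k + 1) *m b k) i 0 = (row i (Tm A b (k + 1)) *m b k) 0 0.
  by rewrite !mxE; apply: eq_bigr => l _; rewrite !mxE.
rewrite row_Tm -mulmxA.
have E := @q_entry _ _ _ _ HK (k + 1 + i%:Z) (Ordinal Hj) (k + 1) k.
rewrite /= in E.
have e : (n - (n.-1 - i).+1 = i)%N by have := ltn_ord i; lia.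
rewrite e in E; rewrite E; first (congr ((_ : bool)%:R); apply/eqP/eqP; have := ltn_ord i; lia).
- have := ltn_ord i; lia.
- have := ltn_ord i; lia.
Qed.

Lemma Kc_ctrl (R : realType) (n : nat) (A : int -> 'M[R]_n) b :
  (forall k, Kc A b k \in unitmx) -> completely_controllable A b.
Proof.
move=> HK k xs xf.
pose w := invmx (Kc A b k) *m (xf - phi A k n *m xs).
exists (fun z => \sum_(i < n) (if z == k + i%:Z then w i 0 else 0)).
have -> : traj A b k xs (fun z => \sum_(i < n) (if z == k + i%:Z then w i 0 else 0)) n
   = phi A k n *m xs + traj A b k 0 (fun z => \sum_(i < n) (if z == k + i%:Z then w i 0 else 0)) n.
  by rewrite !traj_eq mulmx0 add0r.
rewrite Kc_traj0.
have -> : (\col_(i < n) \sum_(i0 < n) (if k + i%:Z == k + i0%:Z then w i0 0 else 0)) = w.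
  apply/colP => i; rewrite mxE (bigD1 i) //= eqxx big1 ?addr0 // => l Hl.
  have -> : (k + i%:Z == k + l%:Z) = false; last by [].
  apply/negbTE/eqP => E; move/eqP: Hl; apply; apply: val_inj => /=; lia.
by rewrite /w mulKVmx // addrC subrK.
Qed.

Theorem theorem2 (R : realType) (n : nat)
  (A : int -> 'M[R]_n) (b : int -> 'cV[R]_n) (c : int -> 'rV[R]_n) :
  completely_controllable A b <->
  exists (At : int -> 'M[R]_n) (bt : int -> 'cV[R]_n) (ct : int -> 'rV[R]_n),
    controller_canonical_form At bt /\ alg_equiv A b c At bt ct.
Proof.
split.
  move=> H; have HK := ctrl_unit H.
  exists (fun k => Tm A b (k + 1) *m A k *m invmx (Tm A b k)),
         (fun k => Tm A b (k + 1) *m b k), (fun k => c k *m invmx (Tm A b k)).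
  split; first by move=> k; exact: Tm_ccf.
  by exists (Tm A b); split; [exact: Tm_unit|].
move=> [At [bt [ct [Hc [T [HT HE]]]]]].
apply: Kc_ctrl => k.
have := ccf_Kc_unit Hc k.
rewrite (Kc_equiv HT (fun k => proj1 (HE k)) (fun k => proj1 (proj2 (HE k)))).
by rewrite unitmx_mul => /andP[].
Qed.
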